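(* Let $G=(V,E)$ be a (directed) graph with all edges of unit length, let $r\ge0$ be an integer, and let $H=(V,E')$ with $E'\subseteq E$. Then $H$ is an $r$-fault tolerant $2$-spanner of $G$ if and only if for every $(u,v)\in E$, either $(u,v)\in E'$ or there are at least $r+1$ paths of length $2$ from $u$ to $v$ in $E'$.
   Context: $d_H$ denotes the (directed) shortest-path distance in $H$ with unit edge lengths. For $F\subseteq V$, $G\setminus F$ denotes $G$ with the vertices of $F$ and incident edges removed. $H$ is an $r$-fault tolerant $2$-spanner of $G$ if for every $F\subseteq V$ with $|F|\le r$ and all $u,v\in V\setminus F$, $d_{H\setminus F}(u,v)\le 2\,d_{G\setminus F}(u,v)$. Paths of length 2 from $u$ to $v$ are distinguished by their middle vertex. *)

(* Defs.v *)
From mathcomp Require Import all_boot.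
Set Implicit Arguments. Unset Strict Implicit. Unset Printing Implicit Defensive.

(* A directed graph on a finite vertex set V is an edge relation e : rel V
   (unit edge lengths).  A subgraph H = (V, E') with E' ⊆ E is a relation
   h with subrel h e. *)

Definition vdel (V : finType) (e : rel V) (F : {set V}) : rel V :=
  [rel x y | [&& e x y, x \notin F & y \notin F]].

Definition walk_len (V : finType) (e : rel V) (u v : V) (k : nat) : Prop :=
  exists p : seq V, [/\ size p = k, path e u p & last u p = v].

(* d_h(u,v) <= c * d_e(u,v), with d = shortest-path distance (possibly
   infinite): whenever there is a u-v walk of length k in e, there is one
   of length at most c*k in h. *)
Definition dist_le_mul (V : finType) (h e : rel V) (c : nat) (u v : V) : Prop :=
  forall k, walk_len e u v k -> exists2 k', k' <= c * k & walk_len h u v k'.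

Definition ft_2spanner (V : finType) (G H : rel V) (r : nat) : Prop :=
  forall (F : {set V}), #|F| <= r ->
    forall u v : V, u \notin F -> v \notin F ->
      dist_le_mul (vdel H F) (vdel G F) 2 u v.

Definition n_2paths (V : finType) (h : rel V) (u v : V) : nat :=
  #|[set w | h u w && h w v]|.

(* Main.v *)
Require Import Defs.
From mathcomp Require Import all_boot.

Lemma pick_mid (V : finType) (H : rel V) (r : nat) (F : {set V}) x y :
  #|F| <= r -> r.+1 <= #|[set w | H x w && H w y]| ->
  exists w, [&& w \notin F, H x w & H w y].
Proof.
move=> hF hn.
have : [set w | H x w && H w y] :\: F != set0.
  apply/negP; rewrite setD_eq0 => sub.
  have := leq_trans hn (subset_leq_card sub).
  by rewrite ltnNge hF.
case/set0Pn => w; rewrite !inE => /andP[wF hw].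
by exists w; rewrite wF.
Qed.

Lemma edge_step (V : finType) (G H : rel V) (r : nat) (F : {set V}) x y :
  #|F| <= r ->
  (forall u v : V, G u v -> H u v \/ r.+1 <= n_2paths H u v) ->
  vdel G F x y ->
  exists q : seq V, [/\ size q <= 2, path (vdel H F) x q & last x q = y].
Proof.
move=> hF hyp /= /and3P[gxy xF yF].
case: (hyp _ _ gxy) => [hxy|hn].
  by exists [:: y]; split => //=; rewrite /vdel /= hxy xF yF.
have [w /and3P[wF hxw hwy]] := @pick_mid _ H r F x y hF hn.
by exists [:: w; y]; split => //=; rewrite /vdel /= hxw hwy xF yF wF.
Qed.

Lemma walk_step (V : finType) (G H : rel V) (r : nat) (F : {set V}) :
  #|F| <= r ->
  (forall u v : V, G u v -> H u v \/ r.+1 <= n_2paths H u v) ->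
  forall p u, path (vdel G F) u p ->
  exists q : seq V, [/\ size q <= 2 * size p, path (vdel H F) u q & last u q = last u p].
Proof.
move=> hF hyp; elim => [|y p IH] u /=.
  by move=> _; exists [::].
case/andP => euy pp.
have [q1 [s1 p1 l1]] := @edge_step _ G H r F _ _ hF hyp euy.
have [q2 [s2 p2 l2]] := IH _ pp.
exists (q1 ++ q2); split.
- rewrite size_cat mulnS; exact: leq_add.
- by rewrite cat_path p1 l1.
- by rewrite last_cat l1.
Qed.

Theorem lemma3p1 (V : finType) (G H : rel V) (r : nat) :
  irreflexive G -> subrel H G ->
  ft_2spanner G H r <->
  (forall u v : V, G u v -> H u v \/ r.+1 <= n_2paths H u v).
Proof.
move=> irr sub; split.
- move=> sp u v guv.
  case huv: (H u v); first by left.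
  right; rewrite ltnNge; apply/negP => hn.
  set F := [set w | H u w && H w v].
  have uF : u \notin F.
    by rewrite inE; apply/negP => /andP[/sub huu _]; rewrite irr in huu.
  have vF : v \notin F.
    by rewrite inE; apply/negP => /andP[_ /sub hvv]; rewrite irr in hvv.
  have hw : walk_len (vdel G F) u v 1.
    by exists [:: v]; split => //=; rewrite /vdel /= guv uF vF.
  have [k' hk [q [sq pq lq]]] := sp F hn u v uF vF 1 hw.
  case: q sq pq lq => [|a [|b [|c q]]] //= sq.
  + move=> _ euv; move: guv; rewrite -euv irr //.
  + rewrite /vdel /= => /andP[/and3P[hua _ _] _] ea; move: hua; by rewrite ea huv.
  + rewrite /vdel /= => /and3P[/and3P[hua _ aF] /and3P[hbv _ _] _] eb.
    by move: aF; rewrite inE hua -eb hbv.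
  + by move: hk; rewrite -sq.
- move=> hyp F hF u v uF vF k [p [sp pp lp]].
  have [q [sq pq lq]] := @walk_step _ G H r F hF hyp _ _ pp.
  exists (size q); first by rewrite -sp.
  by exists q; split => //; rewrite lq.
Qed.
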